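(* Let $\alpha_1,\alpha_2$ be the maps defined on gapset filtrations $F=(F_0,F_1,F_2)$ of depth at most $3$ (with $F_0=[1,m-1]$, $m$ the multiplicity) by $\alpha_1(F)=(F_0\sqcup\{m\},F_1,F_2)$ and $\alpha_2(F)=(F_0\sqcup\{m\},F_1\sqcup\{m\},F_2)$. Then the images of $\alpha_1$ and $\alpha_2$ are disjoint: there are no gapset filtrations $F,F'$ of depth at most $3$ with $\alpha_1(F)=\alpha_2(F')$.
   Context: A gapset is a finite set $G \subset \mathbb{N}_+$ such that for all $z \in G$, whenever $z=x+y$ with $x,y\in\mathbb{N}_+$, we have $x\in G$ or $y\in G$. Its multiplicity is the least $m\ge1$ with $m\notin G$, and its depth is $\lceil c/m\rceil$ where $c=\max G+1$ ($c=0$ if $G=\emptyset$). For $m\ge1$, an $m$-filtration is a sequence $(F_0,\dots,F_t)$ with $F_0=[1,m-1]\supseteq F_1\supseteq\dots\supseteq F_t$; it is a gapset filtration if $\bigcup_i(im+F_i)$ is a gapset, and its multiplicity and depth are those of that gapset. Gapset filtrations of depth at most $3$ are written as triples $(F_0,F_1,F_2)$, padding with empty sets if necessary. *)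

(* Defs.v *)
From mathcomp Require Import all_boot.
From mathcomp Require Import finmap.
Set Implicit Arguments. Unset Strict Implicit. Unset Printing Implicit Defensive.
Local Open Scope fset_scope.

Definition is_gapset (G : {fset nat}) : Prop :=
  0 \notin G /\
  forall z, z \in G -> forall x y, 0 < x -> 0 < y -> (x + y)%N = z -> x \in G \/ y \in G.

Definition interval1 (m : nat) : {fset nat} := [fset i | i in iota 1 m.-1].

Definition shiftf (k : nat) (F : {fset nat}) : {fset nat} := (fun x => (k + x)%N) @` F.

Definition filt_set (m : nat) (F0 F1 F2 : {fset nat}) : {fset nat} :=
  F0 `|` shiftf m F1 `|` shiftf (2 * m)%N F2.

(* (F0,F1,F2) is a gapset m-filtration (of length at most 3, i.e. depth <= 3,
   shorter filtrations padded with empty sets). *)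
Definition gapset_filtration3 (m : nat) (F0 F1 F2 : {fset nat}) : Prop :=
  1 <= m /\ F0 = interval1 m /\ F1 `<=` F0 /\ F2 `<=` F1 /\
  is_gapset (filt_set m F0 F1 F2).

(* Main.v *)
Require Import Defs.
From mathcomp Require Import all_boot.
From mathcomp Require Import finmap.
Local Open Scope fset_scope.

Lemma in_interval1 x m : (x \in interval1 m) = (1 <= x < 1 + m.-1)%N.
Proof.
rewrite /interval1.
apply/imfsetP/idP.
- by move=> [y /= Hy ->]; rewrite -mem_iota.
- by move=> H; exists x => //=; rewrite mem_iota.
Qed.

Theorem mainTheorem12 :
  forall (m m' : nat) (F0 F1 F2 G0 G1 G2 : {fset nat}),
    gapset_filtration3 m F0 F1 F2 ->
    gapset_filtration3 m' G0 G1 G2 ->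
    ~ ((F0 `|` [fset m], F1, F2) = (G0 `|` [fset m'], G1 `|` [fset m'], G2)).
Proof.
move=> m m' F0 F1 F2 G0 G1 G2 [Hm [HF0 [HF1 _]]] [Hm' [HG0 _]] [E0 E1 _].
have h1 : m' \in F1 by rewrite E1 in_fsetU in_fset1 eqxx orbT.
have h2 : m' \in F0 by apply: (fsubsetP HF1).
have h3 : m \in G0 `|` [fset m'] by rewrite -E0 in_fsetU in_fset1 eqxx orbT.
move: h2 h3; rewrite HF0 HG0 in_fsetU in_fset1 !in_interval1.
clear -Hm Hm'; case/andP=> _ A; case/orP.
- case/andP=> _ B. move: A B; case: m Hm => // m _; case: m' Hm' => // m' _ /=.
  rewrite !add1n !ltnS => A B.
  have := leq_trans A (ltnW B). by rewrite ltnn.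
- move/eqP=> E; subst m'. move: A; clear Hm'; case: m Hm => // m _ /=. by rewrite add1n ltnn.
Qed.
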